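(* For $k\ge4$, $\Phi_k(d_{\mathrm{lbd}}(k),x)>0$ for all $x\in[\frac12-\frac1{2^k},\frac12]$.
   Context: $\Phi_k(d,x)=-\log(1-x)-d(1-k^{-1}-d^{-1})\log(1-2x^k)+(d-1)\log(1-x^{k-1})$; $d_{\mathrm{lbd}}(4)=16.7$, $d_{\mathrm{lbd}}(k)=(2^{k-1}-2)k\log2$ for $k\ge5$. *)

(* Defs.v *)
From Stdlib Require Import Reals.
Open Scope R_scope.

Definition Phi (k : nat) (d x : R) : R :=
  - ln (1 - x)
  - d * (1 - / INR k - / d) * ln (1 - 2 * x ^ k)
  + (d - 1) * ln (1 - x ^ (k - 1)).

Definition d_lbd (k : nat) : R :=
  if (k <=? 4)%nat then 167 / 10
  else (2 ^ (k - 1) - 2) * INR k * ln 2.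

(* Main.v *)
Require Import Defs.
From Stdlib Require Import Reals.
Open Scope R_scope.
From Stdlib Require Import Lra Psatz.
From Coquelicot Require Import Coquelicot.
Open Scope R_scope.

Lemma mono_le (f df : R -> R) (a b : R) : a <= b ->
  (forall c, a <= c <= b -> is_derive f c (df c)) ->
  (forall c, a < c < b -> 0 <= df c) -> f a <= f b.
Proof.
  intros Hab Hd Hp. destruct (Req_dec a b) as [->|Hne]; [lra|].
  destruct (MVT_cor2 f df a b) as [c [Hc Hc2]]; [lra| |].
  - intros c Hc. apply is_derive_Reals. now apply Hd.
  - assert (0 <= df c) by (apply Hp; lra). nra.
Qed.

Lemma ln_up (v : R) : 0 <= v < 1 ->
  ln (1 - v) <= - v - v^2/2 - v^3/3 - v^4/4.
Proof.
  intros Hv.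
  set (f := fun x => - x - x^2/2 - x^3/3 - x^4/4 - ln (1 - x)).
  assert (f 0 <= f v).
  { apply (mono_le f (fun x => x^4/(1-x))); [lra| |].
    - intros c Hc. unfold f. auto_derive; [lra|]. field. lra.
    - intros c Hc. apply Rdiv_le_0_compat; [|lra]. nra. }
  unfold f in H. replace (1 - 0) with 1 in H by ring. rewrite ln_1 in H. lra.
Qed.

Lemma ln_lo (v : R) : 0 <= v < 1 ->
  - v - v^2/2 - v^3/3 - v^4/(4*(1-v)) <= ln (1 - v).
Proof.
  intros Hv.
  set (f := fun x => ln (1 - x) + x + x^2/2 + x^3/3 + x^4/(4*(1-x))).
  assert (f 0 <= f v).
  { apply (mono_le f (fun x => x^4/(4*(1-x)^2))); [lra| |].
    - intros c Hc. unfold f. auto_derive; [lra|]. field. lra.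
    - intros c Hc. apply Rdiv_le_0_compat; [nra|]. assert (0 < 1 - c) by lra. nra. }
  unfold f in H. replace (1 - 0) with 1 in H by ring. rewrite ln_1 in H. lra.
Qed.

Lemma key_alg (d K N delta t y s : R) : 1 < N -> 0 <= delta <= 1 -> 0 <= t -> 0 <= y ->
  y*(1+t) <= 1 -> 0 <= K -> 0 <= d - K -> (d-K)*delta <= K*t -> 0 <= s <= 1 ->
  (d-1) * (y/N) / (1 - s*(y/N)) - (d-K-1) * ((1-delta)*(y/N)) / (1 - s*((1-delta)*(y/N)))
   <= K / (N - s).
Proof.
  intros HN Hd Ht Hy Hyt HK HdK Hdt Hs.
  set (b := y/N). set (a := (1-delta)*b).
  assert (Hy1 : y <= 1) by nra.
  assert (Hb0 : 0 <= b) by (unfold b; apply Rdiv_le_0_compat; lra).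
  assert (HbN : b*N = y) by (unfold b; field; lra).
  assert (Hb1 : b <= 1/N).
  { unfold b. apply Rmult_le_compat_r; [|lra]. left; apply Rinv_0_lt_compat; lra. }
  assert (Hb1' : b < 1).
  { assert (1/N < 1). { apply (Rmult_lt_reg_r N); [lra|]. field_simplify; lra. } lra. }
  assert (Ha0 : 0 <= a) by (unfold a; nra).
  assert (Hab : a <= b) by (unfold a; nra).
  set (p := 1 - s*b). set (q := 1 - s*a). set (r := N - s).
  assert (Hp : 0 < p) by (unfold p; nra).
  assert (Hpq : p <= q) by (unfold p, q; nra).
  assert (Hr : 0 < r) by (unfold r; lra).
  assert (E1 : (d-1)*b/p - (d-K-1)*a/q = (d-K-1)*(delta*b/(p*q)) + K*(b/p)).
  { assert (q <> 0) by lra. assert (p <> 0) by lra. unfold q, p in *. unfold a in *. field. split; assumption. }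
  rewrite E1.
  assert (X0 : 0 <= delta*b/(p*q)).
  { apply Rdiv_le_0_compat; nra. }
  assert (X1 : delta*b/(p*q) <= delta*b/(p*p)).
  { apply Rmult_le_compat_l; [nra|]. apply Rinv_le_contravar; nra. }
  assert (X2 : (d-K-1)*(delta*b/(p*q)) <= K*t*(b/(p*p))).
  { apply Rle_trans with ((d-K)*(delta*b/(p*q))); [nra|].
    apply Rle_trans with ((d-K)*(delta*b/(p*p))); [nra|].
    replace ((d-K)*(delta*b/(p*p))) with (((d-K)*delta)*(b/(p*p))) by (field; repeat split; lra).
    apply Rmult_le_compat_r; [apply Rdiv_le_0_compat; nra|lra]. }
  assert (X3 : b/p + t*(b/(p*p)) <= 1/r).
  { assert (Hpr : 0 < p*p*r) by (apply Rmult_lt_0_compat; nra).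
    assert (b*p*r + t*b*r <= p*p).
    { assert (N*N*(b*p*r + t*b*r) <= N*N*(p*p)).
      { unfold p, r. replace (N*N*((b*(1-s*b)*(N-s)) + t*b*(N-s))) with
          (y*(N-s*y)*(N-s) + t*y*N*(N-s)) by (rewrite <- HbN; ring).
        replace (N*N*((1-s*b)*(1-s*b))) with ((N-s*y)*(N-s*y)) by (rewrite <- HbN; ring).
        assert (t*y*N*(N-s) <= (1-y)*N*(N-s)).
        { apply Rmult_le_compat_r; [lra|]. apply Rmult_le_compat_r; lra. }
        assert ((N-s*y)*(N-s*y) - y*(N-s*y)*(N-s) - (1-y)*N*(N-s) = N*s*((1-y)*(1-y))) by ring.
        assert (0 <= N*s*((1-y)*(1-y))) by (apply Rmult_le_pos; nra).
        lra. }
      apply (Rmult_le_reg_l (N*N)); [nra|lra]. }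
    replace (b/p + t*(b/(p*p))) with ((b*p*r + t*b*r)/(p*p*r)) by (field; repeat split; lra).
    replace (1/r) with ((p*p)/(p*p*r)) by (field; repeat split; lra).
    apply Rmult_le_compat_r; [left; apply Rinv_0_lt_compat; lra|lra]. }
  replace (K/(N-s)) with (K*(1/r)) by (unfold r; field; lra).
  assert (K*(b/p + t*(b/(p*p))) <= K*(1/r)) by (apply Rmult_le_compat_l; lra).
  lra.
Qed.

Lemma psi_bound (d K N delta t y : R) : 1 < N -> 0 <= delta <= 1 -> 0 <= t -> 0 <= y ->
  y*(1+t) <= 1 -> 0 <= K -> 0 <= d - K -> (d-K)*delta <= K*t ->
  K * ln (1 - 1/N) <= (d-1) * ln (1 - y/N) - (d-K-1) * ln (1 - (1-delta)*(y/N)).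
Proof.
  intros HN Hd Ht Hy Hyt HK HdK Hdt.
  assert (Hy1 : y <= 1) by nra.
  assert (Hb1 : y/N < 1).
  { apply (Rmult_lt_reg_r N); [lra|]. field_simplify; lra. }
  assert (Hb0 : 0 <= y/N) by (apply Rdiv_le_0_compat; lra).
  remember (y/N) as b eqn:Hbdef.
  set (f := fun s => (d-1) * ln (1 - s*b) - (d-K-1) * ln (1 - s*((1-delta)*b)) - K * ln (1 - s/N)).
  assert (f 0 <= f 1).
  { apply (mono_le f (fun s => - (d-1) * b / (1 - s*b) + (d-K-1) * ((1-delta)*b) / (1 - s*((1-delta)*b)) + K/(N-s))); [lra| |].
    - intros c Hc. unfold f.
      assert (c/N < 1). { apply (Rmult_lt_reg_r N); [lra|]. field_simplify; lra. }
      assert (c*/N < 1) by exact H.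
      assert (N - c <> 0) by lra.
      assert (c*b <= b) by nra.
      assert (0 <= c*((1-delta)*b) <= c*b) by (split; [apply Rmult_le_pos; nra | apply Rmult_le_compat_l; nra]).
      auto_derive.
      + repeat split; lra.
      + field. repeat split; try lra.
    - intros c Hc. pose proof (key_alg d K N delta t y c HN Hd Ht Hy Hyt HK HdK Hdt ltac:(lra)).
      rewrite <- Hbdef in H. lra. }
  unfold f in H. rewrite !Rmult_0_l, Rminus_0_r, Rdiv_0_l, Rminus_0_r, ln_1 in H.
  rewrite !Rmult_1_l in H. lra.
Qed.

Lemma bern_up (n : nat) (dl : R) : 0 <= dl <= 1 -> (1-dl)^n * (1 + INR n * dl) <= 1.
Proof.
  intros Hd. induction n as [|n IH].
  - simpl. lra.
  - rewrite S_INR. simpl.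
    assert (0 <= (1-dl)^n) by (apply pow_le; lra).
    assert ((1-dl)*(1 + (INR n + 1)*dl) <= 1 + INR n * dl).
    { pose proof (pos_INR n). nra. }
    assert ((1 - dl) * (1 - dl) ^ n * (1 + (INR n + 1) * dl)
            = (1-dl)^n * ((1-dl)*(1 + (INR n + 1)*dl))) by ring.
    rewrite H1. apply Rle_trans with ((1-dl)^n * (1 + INR n * dl)); [|exact IH].
    apply Rmult_le_compat_l; assumption.
Qed.

Lemma ln_le' (a b : R) : 0 < a -> a <= b -> ln a <= ln b.
Proof.
  intros Ha Hab. destruct (Req_dec a b) as [->|Hne]; [lra|].
  left. apply ln_increasing; lra.
Qed.

Lemma main_gen (k : nat) (x d : R) : (4 <= k)%nat -> 1 / 2 - 1 / 2 ^ k <= x <= 1 / 2 -> 0 < d ->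
  ln 2 - ln (1 + 1/2^(k-1)) + (d / INR k) * ln (1 - 1/2^(k-1)) <= Phi k d x.
Proof.
  intros Hk Hx Hd.
  destruct k as [|m]; [lia|].
  replace (S m - 1)%nat with m by lia.
  set (N := 2^m).
  assert (HN : 8 <= N).
  { unfold N. replace m with (3 + (m-3))%nat by lia. rewrite pow_add.
    assert (1 <= 2^(m-3)) by (apply pow_R1_Rle; lra). simpl. lra. }
  assert (H2k : 2^(S m) = 2*N) by reflexivity.
  set (dl := 1 - 2*x).
  assert (Hdl : 0 <= dl <= 1/N).
  { unfold dl. rewrite H2k in Hx. split; [lra|].
    assert (1/(2*N) = (1/N)/2) by (field; lra). lra. }
  assert (HN1 : 1/N <= 1/8).
  { apply Rmult_le_compat_l; [lra|]. apply Rinv_le_contravar; lra. }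
  assert (Hxd : x = (1-dl)/2) by (unfold dl; field).
  set (y := (1-dl)^m).
  assert (Hy0 : 0 <= y) by (apply pow_le; lra).
  assert (Hxm : x^m = y/N).
  { rewrite Hxd. unfold y, N. unfold Rdiv. rewrite Rpow_mult_distr, pow_inv. reflexivity. }
  assert (Hxk : 2 * x^(S m) = (1-dl)*(y/N)).
  { simpl. rewrite Hxm, Hxd. field. lra. }
  set (K := d / INR (S m)).
  assert (Hk0 : 1 <= INR (S m)) by (apply (le_INR 1); lia).
  assert (HK : 0 <= K) by (unfold K; apply Rdiv_le_0_compat; lra).
  set (t := INR m * dl).
  assert (Ht : 0 <= t) by (unfold t; pose proof (pos_INR m); nra).
  assert (Hyt : y * (1 + t) <= 1) by (unfold y, t; apply bern_up; lra).
  assert (HdK : d - K = K * INR m).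
  { unfold K. rewrite S_INR. field. rewrite <- S_INR. lra. }
  pose proof (pos_INR m).
  pose proof (psi_bound d K N dl t y ltac:(lra) ltac:(lra) Ht Hy0 Hyt HK
                ltac:(nra) ltac:(rewrite HdK; unfold t; nra)) as Hpsi.
  assert (HPhi : Phi (S m) d x = - ln (1 - x) - (d-K-1) * ln (1 - (1-dl)*(y/N)) + (d-1) * ln (1 - y/N)).
  { unfold Phi. replace (S m - 1)%nat with m by lia. rewrite Hxm, <- Hxk.
    replace (d * (1 - / INR (S m) - / d)) with (d - K - 1) by (unfold K; field; lra).
    reflexivity. }
  rewrite HPhi.
  assert (Hlx : - ln (1 - x) = ln 2 - ln (1 + dl)).
  { replace (1 - x) with ((1+dl) * / 2) by (rewrite Hxd; field).
    rewrite ln_mult by (apply Rinv_0_lt_compat || idtac; lra).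
    rewrite ln_Rinv by lra. ring. }
  assert (Hl1 : ln (1 + dl) <= ln (1 + 1/N)) by (apply ln_le'; lra).
  lra.
Qed.

Lemma ln2_lo : 131/192 <= ln 2.
Proof.
  pose proof (ln_up (1/2) ltac:(lra)) as H.
  replace (1 - 1/2) with (/2) in H by field. rewrite ln_Rinv in H by lra. lra.
Qed.

Lemma ln1p_up (v : R) : 0 <= v ->
  ln (1 + v) <= v/(1+v) + (v/(1+v))^2/2 + (v/(1+v))^3/3 + (v/(1+v))^4/(4*(1-v/(1+v))).
Proof.
  intros Hv. set (w := v/(1+v)).
  assert (Hw : 0 <= w < 1).
  { unfold w. split; [apply Rdiv_le_0_compat; lra|].
    apply (Rmult_lt_reg_r (1+v)); [lra|]. field_simplify; lra. }
  pose proof (ln_lo w Hw).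
  assert (ln (1 + v) + ln (1 - w) = 0).
  { rewrite <- ln_mult by lra.
    replace ((1+v)*(1-w)) with 1 by (unfold w; field; lra). apply ln_1. }
  lra.
Qed.

Lemma ln1p_le (v : R) : 0 <= v -> ln (1 + v) <= v.
Proof.
  intros Hv.
  set (f := fun x => x - ln (1 + x)).
  assert (f 0 <= f v).
  { apply (mono_le f (fun x => x/(1+x))); [lra| |].
    - intros c Hc. unfold f. auto_derive; [lra|]. field. lra.
    - intros c Hc. apply Rdiv_le_0_compat; lra. }
  unfold f in H. replace (1 + 0) with 1 in H by ring. rewrite ln_1 in H. lra.
Qed.

Lemma case4 : ln 2 - ln (1 + 1/2^(4-1)) + (167/10 / INR 4) * ln (1 - 1/2^(4-1)) > 0.
Proof.
  pose proof ln2_lo.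
  simpl (2^(4-1)). replace (INR 4) with 4 by (simpl; ring).
  pose proof (ln1p_up (1/(2*(2*(2*1)))) ltac:(lra)) as A.
  pose proof (ln_lo (1/(2*(2*(2*1)))) ltac:(lra)) as B.
  lra.
Qed.

Lemma case5 (m : nat) : (4 <= m)%nat ->
  ln 2 - ln (1 + 1/2^m) + ((2^m - 2) * INR (S m) * ln 2 / INR (S m)) * ln (1 - 1/2^m) > 0.
Proof.
  intros Hm. set (N := 2^m).
  assert (HN : 16 <= N).
  { unfold N. replace m with (4 + (m-4))%nat by lia. rewrite pow_add.
    assert (1 <= 2^(m-4)) by (apply pow_R1_Rle; lra). simpl. lra. }
  assert (HS : 0 < INR (S m)) by (apply lt_0_INR; lia).
  replace ((N - 2) * INR (S m) * ln 2 / INR (S m)) with ((N-2) * ln 2) by (field; lra).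
  set (v := 1/N).
  assert (Hv : 0 < v <= 1/16).
  { unfold v. split. apply Rdiv_lt_0_compat; lra.
    apply Rmult_le_compat_l; [lra|]. apply Rinv_le_contravar; lra. }
  assert (HNv : N * v = 1) by (unfold v; field; lra).
  pose proof ln2_lo.
  pose proof (ln1p_le v ltac:(lra)) as A.
  pose proof (ln_lo v ltac:(lra)) as B.
  set (T := v^4/(4*(1-v))) in B.
  assert (HT : 0 <= T <= v^4 * (4/15)).
  { unfold T. split. apply Rdiv_le_0_compat; [nra|lra].
    unfold Rdiv. apply Rmult_le_compat_l; [nra|].
    apply Rle_trans with (/(15/4)); [apply Rinv_le_contravar; lra | right; field]. }
  set (S := v + v^2/2 + v^3/3 + T).
  assert (HS1 : (N-2) * S <= 1 - 3/2 * v).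
  { apply (Rmult_le_reg_l v); [lra|].
    replace (v * ((N-2)*S)) with ((N*v) * S - 2*v*S) by ring. rewrite HNv.
    unfold S. nra. }
  assert (Hl : 1 + (N-2) * ln (1 - v) >= 3/2 * v).
  { assert ((N-2) * ln (1-v) >= (N-2) * (-S)).
    { apply Rle_ge, Rmult_le_compat_l; [lra|]. unfold S. lra. }
    lra. }
  assert (ln 2 * (1 + (N-2) * ln (1 - v)) >= ln 2 * (3/2*v)).
  { apply Rle_ge, Rmult_le_compat_l; lra. }
  nra.
Qed.

Theorem lemma3p5 (k : nat) (x : R) :
  (4 <= k)%nat ->
  1 / 2 - 1 / 2 ^ k <= x <= 1 / 2 ->
  Phi k (d_lbd k) x > 0.
Proof.
  intros Hk Hx.
  destruct (Nat.eq_dec k 4) as [->|Hk5].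
  - assert (Hd : d_lbd 4 = 167/10) by reflexivity.
    pose proof (main_gen 4 x (d_lbd 4) Hk Hx ltac:(rewrite Hd; lra)).
    rewrite Hd in H |- *. pose proof case4. lra.
  - destruct k as [|m]; [lia|].
    assert (Hd : d_lbd (S m) = (2^m - 2) * INR (S m) * ln 2).
    { unfold d_lbd. replace ((S m <=? 4)%nat) with false by (symmetry; apply Nat.leb_gt; lia).
      replace (S m - 1)%nat with m by lia. reflexivity. }
    assert (H16 : 16 <= 2^m).
    { replace m with (4 + (m-4))%nat by lia. rewrite pow_add.
      assert (1 <= 2^(m-4)) by (apply pow_R1_Rle; lra). simpl. lra. }
    pose proof ln2_lo.
    assert (0 < INR (S m)) by (apply lt_0_INR; lia).
    assert (Hdp : 0 < d_lbd (S m)).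
    { rewrite Hd. apply Rmult_lt_0_compat; [|lra]. apply Rmult_lt_0_compat; lra. }
    pose proof (main_gen (S m) x (d_lbd (S m)) Hk Hx Hdp) as G.
    replace (S m - 1)%nat with m in G by lia.
    rewrite Hd in G |- *. pose proof (case5 m ltac:(lia)). lra.
Qed.
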